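(* Let $f:[0,\infty)\to\mathbb{C}$ be smooth with support in $[0,\rho]$ for some $\rho<1$. For $i,j\in\mathbb{N}_0$ and $t\in(0,1)$ let $$G_{i,j}(t)=\int_{1-t}^{1}u f(u)\,[Q(t,u)]^{i}\,(u^{2}+1-t^{2})^{j}\,\mathrm{d}u,\qquad Q(t,u)=((1+t)^2-u^2)(u^2-(1-t)^2),$$ and $h_k(t)=G_{k,0}(t)=\int_{1-t}^{1}uf(u)[Q(t,u)]^k\,\mathrm{d}u$. Then for every $k\geq 1$ and $t\in(0,1)$, $$\left[D^{2k}h_{k}\right](t)=\left[D^{2k}G_{k,0}\right](t)=k!\,4^{k}\sum_{j=0}^{k-1}(-1)^{j}\frac{(k-1+j)!}{(k-1-j)!\,j!}\left[D^{k-j}G_{0,k-j}\right](t).$$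
   Context: $D$ denotes the operator $(D\varphi)(t)=\frac{1}{t}\varphi'(t)$ and $D^{j}$ its $j$-fold iterate. *)

(* Defs.v *)
From Stdlib Require Import Reals Factorial.
From Coquelicot Require Import Coquelicot.
Open Scope R_scope.

Definition Q (t u : R) : R := ((1 + t)^2 - u^2) * (u^2 - (1 - t)^2).

Definition G (f : R -> C) (i j : nat) (t : R) : C :=
  @RInt C_R_CompleteNormedModule
    (fun u : R => (RtoC (u * (Q t u)^i * (u^2 + 1 - t^2)^j) * f u)%C) (1 - t) 1.

Definition h (f : R -> C) (k : nat) (t : R) : C := G f k 0 t.

Definition Dop (phi : R -> C) (t : R) : C :=
  (Derive (fun s => Re (phi s)) t / t, Derive (fun s => Im (phi s)) t / t).

Definition Dpow (j : nat) (phi : R -> C) : R -> C := Nat.iter j Dop phi.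

Definition smooth_at (f : R -> C) (x : R) : Prop :=
  forall n : nat, ex_derive_n (fun s => Re (f s)) n x /\
                  ex_derive_n (fun s => Im (f s)) n x.

(* Main.v *)
Require Import Defs.
From Stdlib Require Import Reals Factorial Lia Lra Bool Classical.
From Coquelicot Require Import Coquelicot.
Open Scope R_scope.

Definition DopR (phi : R -> R) (t : R) : R := Derive phi t / t.
Definition DpR (n : nat) (phi : R -> R) : R -> R := Nat.iter n DopR phi.

Lemma DpR_S' n phi : DpR (S n) phi = DpR n (DopR phi).
Proof.
  induction n as [|n IH]; [reflexivity|].
  change (DpR (S (S n)) phi) with (DopR (DpR (S n) phi)).
  rewrite IH. reflexivity.
Qed.

Lemma loc01 s : 0 < s < 1 -> locally s (fun y => 0 < y < 1).
Proof.
  intros Hs. apply (open_and _ _ (open_gt 0) (open_lt 1)). exact Hs.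
Qed.

Lemma DpR_ext phi1 phi2 :
  (forall s, 0 < s < 1 -> phi1 s = phi2 s) ->
  forall n s, 0 < s < 1 -> DpR n phi1 s = DpR n phi2 s.
Proof.
  intros H n. induction n as [|n IH]; intros s Hs; [apply H; exact Hs|].
  change (Derive (DpR n phi1) s / s = Derive (DpR n phi2) s / s).
  f_equal. apply Derive_ext_loc.
  apply (filter_imp (fun y => 0 < y < 1)); [exact IH|apply loc01; exact Hs].
Qed.

Lemma DpR_scal n c phi s : DpR n (fun x => c * phi x) s = c * DpR n phi s.
Proof.
  revert s. induction n as [|n IH]; intros s; [reflexivity|].
  change (Derive (DpR n (fun x => c * phi x)) s / s = c * (Derive (DpR n phi) s / s)).
  rewrite (Derive_ext _ (fun x => c * DpR n phi x)); [|exact IH].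
  rewrite Derive_scal. unfold Rdiv. ring.
Qed.

Definition Upto (n : nat) (phi : R -> R) : Prop :=
  forall m, (m <= n)%nat -> forall s, 0 < s < 1 -> ex_derive (DpR m phi) s.

Lemma DpR_plus n phi1 phi2 :
  (forall m, (m < n)%nat -> forall s, 0 < s < 1 ->
     ex_derive (DpR m phi1) s /\ ex_derive (DpR m phi2) s) ->
  forall s, 0 < s < 1 -> DpR n (fun x => phi1 x + phi2 x) s = DpR n phi1 s + DpR n phi2 s.
Proof.
  induction n as [|n IH]; intros H s Hs; [reflexivity|].
  change (Derive (DpR n (fun x => phi1 x + phi2 x)) s / s =
          Derive (DpR n phi1) s / s + Derive (DpR n phi2) s / s).
  rewrite (Derive_ext_loc _ (fun x => DpR n phi1 x + DpR n phi2 x)).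
  - destruct (H n (Nat.lt_succ_diag_r n) s Hs) as [H1 H2].
    rewrite Derive_plus by assumption. unfold Rdiv. ring.
  - apply (filter_imp (fun y => 0 < y < 1)); [|apply loc01; exact Hs].
    intros y Hy. apply IH; [|exact Hy].
    intros m Hm. apply H. lia.
Qed.

Lemma Upto_plus n phi1 phi2 : Upto n phi1 -> Upto n phi2 -> Upto n (fun x => phi1 x + phi2 x).
Proof.
  intros H1 H2 m Hm s Hs.
  apply (ex_derive_ext_loc (fun x => DpR m phi1 x + DpR m phi2 x)).
  - apply (filter_imp (fun y => 0 < y < 1)); [|apply loc01; exact Hs].
    intros y Hy. symmetry. apply DpR_plus; [|exact Hy].
    intros m' Hm' s' Hs'. split; [apply H1|apply H2]; auto; lia.
  - apply (ex_derive_plus (DpR m phi1) (DpR m phi2)); [apply H1|apply H2]; auto.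
Qed.

Lemma Upto_scal n c phi : Upto n phi -> Upto n (fun x => c * phi x).
Proof.
  intros H m Hm s Hs.
  apply (ex_derive_ext (fun x => c * DpR m phi x)).
  - intros y. symmetry. apply DpR_scal.
  - apply ex_derive_scal. apply H; auto.
Qed.

Lemma Upto_ext n phi1 phi2 : (forall s, 0 < s < 1 -> phi1 s = phi2 s) ->
  Upto n phi1 -> Upto n phi2.
Proof.
  intros He H m Hm s Hs.
  apply (ex_derive_ext_loc (DpR m phi1)).
  - apply (filter_imp (fun y => 0 < y < 1)); [|apply loc01; exact Hs].
    intros y Hy. apply DpR_ext; auto.
  - apply H; auto.
Qed.

Lemma Upto_fromD n phi : (forall s, 0 < s < 1 -> ex_derive phi s) ->
  Upto n (DopR phi) -> Upto (S n) phi.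
Proof.
  intros H0 H m Hm s Hs. destruct m as [|m]; [apply H0; exact Hs|].
  rewrite DpR_S'. apply H; auto. lia.
Qed.

Definition w (i j : nat) (t u : R) : R := u * (Q t u)^i * (u^2 + 1 - t^2)^j.
Definition dw (i j : nat) (t u : R) : R :=
  t * (4 * INR i * w (pred i) (S j) t u - 2 * INR j * w i (pred j) t u).

Lemma w_derive i j (t u : R) : is_derive (fun z => w i j z u) t (dw i j t u).
Proof.
  unfold dw, w, Q.
  auto_derive; [exact I|].
  unfold Rminus.
  destruct i as [|i]; destruct j as [|j]; cbn [Nat.pred pow]; rewrite ?Rmult_0_l, ?Rmult_0_r, ?Rmult_1_r, ?Rmult_1_l; ring.
Qed.

Definition GR (g : R -> R) (i j : nat) (t : R) : R :=
  RInt (fun u => w i j t u * g u) (1 - t) 1.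

Lemma g_cont g (Hg : forall x, 0 < x -> forall n, ex_derive_n g n x) x :
  0 < x -> continuous g x.
Proof. intros Hx. apply (ex_derive_continuous (K:=R_AbsRing) (V:=R_NormedModule)). exact (Hg x Hx 1%nat). Qed.

Lemma cont_wg g (Hg : forall x, 0 < x -> forall n, ex_derive_n g n x) i j y z :
  0 < z -> continuous (fun u => w i j y u * g u) z.
Proof.
  intros Hz.
  apply (continuous_mult (fun u => w i j y u) g).
  - apply (ex_derive_continuous (K:=R_AbsRing) (V:=R_NormedModule)). unfold w, Q. auto_derive. trivial.
  - apply (g_cont g Hg). exact Hz.
Qed.

Lemma ex_RInt_wg g (Hg : forall x, 0 < x -> forall n, ex_derive_n g n x) i j y a b :
  0 < a -> 0 < b -> ex_RInt (fun u => w i j y u * g u) a b.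
Proof.
  intros Ha Hb. apply (ex_RInt_continuous (V:=R_CompleteNormedModule)). intros z [Hz1 Hz2].
  apply (cont_wg g Hg). apply Rlt_le_trans with (Rmin a b); auto.
  apply Rmin_glb_lt; auto.
Qed.

Lemma cont2_pow f x y n : continuity_2d_pt f x y ->
  continuity_2d_pt (fun u v => f u v ^ n) x y.
Proof.
  intros H. induction n as [|n IH].
  - change (continuity_2d_pt (fun _ _ => 1) x y). apply continuity_2d_pt_const.
  - change (continuity_2d_pt (fun u v => f u v * f u v ^ n) x y).
    apply (continuity_2d_pt_mult f (fun u v => f u v ^ n)); auto.
Qed.

Ltac c2 := repeat first [ apply continuity_2d_pt_id1 | apply continuity_2d_pt_id2
  | apply continuity_2d_pt_const | apply continuity_2d_pt_mult
  | apply continuity_2d_pt_minus | apply continuity_2d_pt_plus | apply continuity_2d_pt_opp | apply cont2_pow ].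

Lemma cont2_w i j x y : continuity_2d_pt (w i j) x y.
Proof.
  unfold w, Q.
  apply continuity_2d_pt_mult. apply continuity_2d_pt_mult.
  - apply continuity_2d_pt_id2.
  - apply (cont2_pow (fun u v => ((1 + u) ^ 2 - v ^ 2) * (v ^ 2 - (1 - u) ^ 2))). c2.
  - apply (cont2_pow (fun u v => v ^ 2 + 1 - u ^ 2)). c2.
Qed.

Lemma cont2_dwg g (Hg : forall x, 0 < x -> forall n, ex_derive_n g n x) i j x y :
  0 < y ->
  continuity_2d_pt (fun u v => Derive (fun z => w i j z v * g v) u) x y.
Proof.
  intros Hy.
  apply (continuity_2d_pt_ext (fun u v => dw i j u v * g v)).
  { intros u v. rewrite Derive_scal_l. f_equal. symmetry. apply is_derive_unique. apply w_derive. }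
  apply (continuity_2d_pt_mult (dw i j) (fun _ v => g v)).
  - unfold dw. apply continuity_2d_pt_mult; [apply continuity_2d_pt_id1|].
    apply continuity_2d_pt_minus; apply continuity_2d_pt_mult;
      try apply continuity_2d_pt_const; apply cont2_w.
  - apply (continuity_1d_2d_pt_comp g (fun _ v => v)).
    + apply continuity_pt_filterlim. apply (g_cont g Hg). exact Hy.
    + apply continuity_2d_pt_id2.
Qed.
Lemma GR_derive g (Hg : forall x, 0 < x -> forall n, ex_derive_n g n x) i j s :
  0 < s < 1 ->
  is_derive (GR g i j) s
    (s * (4 * INR i * GR g (pred i) (S j) s - 2 * INR j * GR g i (pred j) s)
     + w i j s (1 - s) * g (1 - s)).
Proof.
  intros [Hs0 Hs1].
  assert (Hb := is_derive_RInt_param_bound_comp (fun y u => w i j y u * g u)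
                  (fun y => 1 - y) (fun _ => 1) s (-1) 0).
  assert (E : RInt (fun u => Derive (fun y => w i j y u * g u) s) (1 - s) 1 =
     s * (4 * INR i * GR g (pred i) (S j) s - 2 * INR j * GR g i (pred j) s)).
  { rewrite (RInt_ext _ (fun u => s * (4 * INR i * (w (pred i) (S j) s u * g u)
                                  - 2 * INR j * (w i (pred j) s u * g u)))).
    2:{ intros u _. rewrite Derive_scal_l.
        replace (Derive (fun x => w i j x u) s) with (dw i j s u)
          by (symmetry; apply is_derive_unique; apply w_derive).
        unfold dw. match goal with |- ?a = ?b => change (@eq R a b) end. ring. }
    apply is_RInt_unique.
    assert (I1 := RInt_correct _ _ _ (ex_RInt_wg g Hg (pred i) (S j) s (1 - s) 1 ltac:(lra) ltac:(lra))).
    assert (I2 := RInt_correct _ _ _ (ex_RInt_wg g Hg i (pred j) s (1 - s) 1 ltac:(lra) ltac:(lra))).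
    apply (is_RInt_scal _ _ _ (4 * INR i)) in I1.
    apply (is_RInt_scal _ _ _ (2 * INR j)) in I2.
    assert (I3 := is_RInt_minus _ _ _ _ _ _ I1 I2).
    apply (is_RInt_scal _ _ _ s) in I3.
    exact I3. }
  replace (s * (4 * INR i * GR g (pred i) (S j) s - 2 * INR j * GR g i (pred j) s)
     + w i j s (1 - s) * g (1 - s))
    with (RInt (fun u => Derive (fun y => w i j y u * g u) s) (1 - s) 1 +
          - (w i j s (1 - s) * g (1 - s)) * (-1) + (w i j s 1 * g 1) * 0)
    by (rewrite E; ring).

  apply Hb.
  - apply filter_forall. intros y. apply (ex_RInt_wg g Hg); lra.
  - assert (He : 0 < (1 - s) / 2) by lra. exists (mkposreal _ He).
    apply filter_forall. intros y. apply (ex_RInt_wg g Hg); simpl; lra.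
  - assert (He : 0 < 1 / 2) by lra. exists (mkposreal _ He).
    apply filter_forall. intros y. apply (ex_RInt_wg g Hg); simpl; lra.
  - auto_derive; [trivial|ring].
  - auto_derive; [trivial|ring].
  - exists (mkposreal 1 Rlt_0_1). apply filter_forall. intros x0 t _.
    apply ex_derive_mult; [exists (dw i j x0 t); apply w_derive | apply ex_derive_const].
  - intros t [Ht _]. apply cont2_dwg; auto.
    apply Rlt_le_trans with (2 := Ht). apply Rmin_glb_lt; lra.
  - assert (He : 0 < (1 - s) / 2) by lra. exists (mkposreal _ He).
    intros u v _ Hv. simpl in Hv. apply Rabs_def2 in Hv.
    apply cont2_dwg; auto; lra.
  - assert (He : 0 < 1 / 2) by lra. exists (mkposreal _ He).
    intros u v _ Hv. simpl in Hv. apply Rabs_def2 in Hv.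
    apply cont2_dwg; auto; lra.
  - apply continuity_pt_filterlim. apply (cont_wg g Hg). lra.
  - apply continuity_pt_filterlim. apply (cont_wg g Hg). lra.
Qed.
Definition eb (g : R -> R) (m p q : nat) (s : R) : R :=
  (1 - s)^p * Derive_n g q (1 - s) / s^m.

Lemma eb_derive g (Hg : forall x, 0 < x -> forall n, ex_derive_n g n x) m p q s :
  0 < s < 1 ->
  is_derive (eb g m p q) s
    (s * (- INR p * eb g (S m) (pred p) q s - eb g (S m) p (S q) s
          - INR m * eb g (S (S m)) p q s)).
Proof.
  intros Hs. unfold eb.
  assert (Hsm : forall n, s ^ n <> 0) by (intros; apply pow_nonzero; lra).
  auto_derive.
  { split; [|split; auto].
    exact (Hg (1 + - s) ltac:(lra) (S q)). }
  change (Derive (fun x => Derive_n g q x) (1 + - s)) with (Derive_n g (S q) (1 + - s)).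
  unfold Rminus.
  match goal with |- ?a = ?b => change (@eq R a b) end.
  generalize (Derive_n g q (1 + - s)) (Derive_n g (S q) (1 + - s))
    ((1 + - s) ^ Init.Nat.pred p) ((1 + - s) ^ p). intros r0 r1 A B.
  destruct m as [|m]; cbn [pow Nat.pred].
  - rewrite ?Rmult_0_l, ?Rmult_0_r, ?Rmult_1_l, ?Rmult_1_r, ?Ropp_0, ?Rinv_1. simpl INR. field. lra.
  - generalize (Hsm m). generalize (s ^ m). intros C HC. rewrite S_INR. field. split; [exact HC|lra].
Qed.
Lemma eb_smooth g (Hg : forall x, 0 < x -> forall n, ex_derive_n g n x) :
  forall n m p q, Upto n (eb g m p q).
Proof.
  induction n as [|n IH]; intros m p q.
  - intros m' Hm' s Hs. replace m' with 0%nat by lia.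
    eexists. apply (eb_derive g Hg). exact Hs.
  - apply Upto_fromD.
    { intros s Hs. eexists. apply (eb_derive g Hg). exact Hs. }
    apply (Upto_ext n (fun s => (- INR p) * eb g (S m) (pred p) q s
        + ((-1) * eb g (S m) p (S q) s + (- INR m) * eb g (S (S m)) p q s))).
    + intros s Hs. unfold DopR.
      rewrite (is_derive_unique _ _ _ (eb_derive g Hg m p q s Hs)). field. lra.
    + apply Upto_plus; [apply Upto_scal; apply IH|].
      apply Upto_plus; apply Upto_scal; apply IH.
Qed.

Lemma w_bd i j s : w i j s (1 - s) = 0 ^ i * 2 ^ j * (1 - s) ^ (S j).
Proof.
  unfold w. replace (Q s (1 - s)) with 0 by (unfold Q; ring).
  replace ((1 - s) ^ 2 + 1 - s ^ 2) with (2 * (1 - s)) by ring.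
  rewrite Rpow_mult_distr. cbn [pow]. ring.
Qed.

Lemma DopR_GR g (Hg : forall x, 0 < x -> forall n, ex_derive_n g n x) i j s :
  0 < s < 1 ->
  DopR (GR g i j) s = 4 * INR i * GR g (pred i) (S j) s
     + (- 2 * INR j * GR g i (pred j) s + (0 ^ i * 2 ^ j) * eb g 1 (S j) 0 s).
Proof.
  intros Hs. unfold DopR.
  rewrite (is_derive_unique _ _ _ (GR_derive g Hg i j s Hs)).
  rewrite w_bd. unfold eb. cbn [Derive_n]. field. lra.
Qed.

Lemma GR_smooth g (Hg : forall x, 0 < x -> forall n, ex_derive_n g n x) :
  forall n i j, Upto n (GR g i j).
Proof.
  induction n as [|n IH]; intros i j.
  - intros m' Hm' s Hs. replace m' with 0%nat by lia.
    eexists. apply (GR_derive g Hg). exact Hs.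
  - apply Upto_fromD.
    { intros s Hs. eexists. apply (GR_derive g Hg). exact Hs. }
    apply (Upto_ext n (fun s => 4 * INR i * GR g (pred i) (S j) s
     + (- 2 * INR j * GR g i (pred j) s + (0 ^ i * 2 ^ j) * eb g 1 (S j) 0 s))).
    + intros s Hs. symmetry. apply (DopR_GR g Hg). exact Hs.
    + apply Upto_plus; [apply Upto_scal; apply IH|].
      apply Upto_plus; apply Upto_scal; [apply IH|apply (eb_smooth g Hg)].
Qed.

Fixpoint rs (F : nat -> R) (n : nat) : R :=
  match n with O => F O | S n => rs F n + F (S n) end.

Lemma rs_ext F G n : (forall b, (b <= n)%nat -> F b = G b) -> rs F n = rs G n.
Proof.
  induction n as [|n IH]; intros H; simpl.
  - apply H; lia.
  - rewrite IH by (intros; apply H; lia). rewrite H by lia. reflexivity.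
Qed.

Lemma rs_plus F G n : rs (fun b => F b + G b) n = rs F n + rs G n.
Proof. induction n as [|n IH]; simpl; [reflexivity|rewrite IH; ring]. Qed.

Lemma rs_scal c F n : rs (fun b => c * F b) n = c * rs F n.
Proof. induction n as [|n IH]; simpl; [reflexivity|rewrite IH; ring]. Qed.

Lemma rs_shift F n : rs F (S n) = F O + rs (fun b => F (S b)) n.
Proof. induction n as [|n IH]; simpl in *; [reflexivity|rewrite IH; ring]. Qed.

Lemma rs_zero F n : (forall b, (b <= n)%nat -> F b = 0) -> rs F n = 0.
Proof.
  induction n as [|n IH]; intros H; simpl.
  - apply H; lia.
  - rewrite IH by (intros; apply H; lia). rewrite H by lia. ring.
Qed.

Lemma rs_trunc F N M : (N <= M)%nat -> (forall b, (N < b)%nat -> (b <= M)%nat -> F b = 0) ->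
  rs F M = rs F N.
Proof.
  intros HNM H. induction M as [|M IH].
  - replace N with O by lia. reflexivity.
  - destruct (Nat.eq_dec N (S M)) as [->|Hne]; [reflexivity|].
    simpl. rewrite IH by (try lia; intros; apply H; lia).
    rewrite H by lia. ring.
Qed.

Definition Bf (a b : nat) : R :=
  INR (fact (a + b)) / (INR (fact (a - b)) * INR (fact b)).
Definition ff (k a : nat) : R := INR (fact k) / INR (fact (k - a)).
Definition A (k a b : nat) : R := 4 ^ a * (-1) ^ b * ff k a * Bf a b.

Lemma fact_nz n : INR (fact n) <> 0.
Proof. apply INR_fact_neq_0. Qed.

Lemma Bf_0 a : Bf a 0 = 1.
Proof. unfold Bf. rewrite Nat.add_0_r, Nat.sub_0_r. simpl. field. apply fact_nz. Qed.

Lemma Bf_rule a b : (1 <= b)%nat -> (b <= a)%nat ->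
  Bf a b = (if (b <? a)%nat then Bf (a - 1) b else 0) + 2 * INR (a - b + 1) * Bf a (b - 1).
Proof.
  intros H1 H2. destruct b as [|b']; [lia|].
  destruct (Nat.le_exists_sub (S b') a H2) as [c [Hc _]]. subst a.
  unfold Bf.
  replace (c + S b' + S b')%nat with (S (c + b' + S b')) by lia.
  replace (c + S b' - S b')%nat with c by lia.
  replace (c + S b' + (S b' - 1))%nat with (c + b' + S b')%nat by lia.
  replace (c + S b' - (S b' - 1))%nat with (S c) by lia.
  replace (S b' - 1)%nat with b' by lia.
  replace (c + S b' - S b' + 1)%nat with (S c) by lia.
  set (N := (c + b' + S b')%nat).
  destruct c as [|c'].
  - replace (S b' <? 0 + S b')%nat with false by (symmetry; apply Nat.ltb_ge; lia).
    cbn [fact]. rewrite !mult_INR, !S_INR.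
    replace (INR N) with (2 * INR b' + 1) by (unfold N; rewrite !plus_INR, S_INR; simpl; ring).
    simpl INR. field. split; [apply fact_nz|].
    pose proof (pos_INR b'). lra.
  - replace (S b' <? S c' + S b')%nat with true by (symmetry; apply Nat.ltb_lt; lia).
    replace (S c' + S b' - 1)%nat with (c' + S b')%nat by lia.
    replace (c' + S b' + S b')%nat with N by (unfold N; lia).
    replace (c' + S b' - S b')%nat with c' by lia.
    cbn [fact]. rewrite !mult_INR, !S_INR.
    replace (INR N) with (INR c' + 2 * INR b' + 2) by (unfold N; rewrite !plus_INR, !S_INR; ring).
    rewrite plus_INR, S_INR. simpl (INR 1). field. pose proof (pos_INR b'). pose proof (pos_INR c').
    repeat split; try apply fact_nz; lra.
Qed.

Lemma ff_rule k a : (1 <= a)%nat -> (a <= k)%nat -> ff k a = ff k (a - 1) * INR (k - (a - 1)).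
Proof.
  intros H1 H2. unfold ff.
  replace (k - (a - 1))%nat with (S (k - a)) by lia.
  cbn [fact]. rewrite mult_INR. field. split; [apply fact_nz|]. rewrite S_INR.
  pose proof (pos_INR (k - a)). lra.
Qed.

Lemma A_rule k a b : (1 <= a)%nat -> (a < k)%nat -> (b <= a)%nat ->
  A k a b = (if (b <? a)%nat then 4 * INR (k - (a - 1)) * A k (a - 1) b else 0)
    + match b with O => 0 | S b' => -2 * INR (a - b') * A k a b' end.
Proof.
  intros H1 H2 H3. unfold A.
  rewrite (ff_rule k a) by lia.
  destruct b as [|b'].
  - rewrite Bf_0. replace (0 <? a)%nat with true by (symmetry; apply Nat.ltb_lt; lia).
    rewrite Bf_0. replace a with (S (a - 1)) at 1 by lia. cbn [pow].
    generalize (4 ^ (a - 1)). intros P4. ring.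
  - rewrite (Bf_rule a (S b')) by lia.
    replace (S b' - 1)%nat with b' by lia.
    replace (a - S b' + 1)%nat with (a - b')%nat by lia.
    assert (E4 : 4 ^ a = 4 * 4 ^ (a - 1)) by (replace a with (S (a - 1)) at 1 by lia; reflexivity).
    rewrite E4. cbn [pow].
    generalize (4 ^ (a - 1)) ((-1) ^ b'). intros P4 Sg.
    destruct (S b' <? a)%nat; ring.
Qed.

Definition alpha (k m b : nat) : R :=
  if ((2 * b <=? m) && (m - b <? k))%bool then A k (m - b) b else 0.
Definition beta (k m b : nat) : R :=
  if ((k + b <=? m) && (b <? k))%bool then 4 * alpha k (k + b - 1) b else 0.

Lemma leb_t a b : (a <= b)%nat -> (a <=? b)%nat = true.
Proof. apply Nat.leb_le. Qed.
Lemma leb_f a b : (b < a)%nat -> (a <=? b)%nat = false.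
Proof. apply Nat.leb_gt. Qed.
Lemma ltb_t a b : (a < b)%nat -> (a <? b)%nat = true.
Proof. apply Nat.ltb_lt. Qed.
Lemma ltb_f a b : (b <= a)%nat -> (a <? b)%nat = false.
Proof. apply Nat.ltb_ge. Qed.

Lemma alpha_zero k m b : ~ ((2 * b <= m)%nat /\ (m - b < k)%nat) -> alpha k m b = 0.
Proof.
  intros H. unfold alpha.
  destruct (Nat.leb_spec (2 * b) m); destruct (Nat.ltb_spec (m - b) k); cbn [andb]; auto.
  exfalso; apply H; split; assumption.
Qed.

Lemma alpha_t k m b : (2 * b <= m)%nat -> (m - b < k)%nat -> alpha k m b = A k (m - b) b.
Proof.
  intros H1 H2. unfold alpha. rewrite (leb_t _ _ H1), (ltb_t _ _ H2). reflexivity.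
Qed.

Lemma alpha_rec k m b : alpha k (S m) b =
  (if ((m - b + 1 <? k) && (b <=? m))%bool then 4 * INR (k + b - m) * alpha k m b else 0)
  + match b with O => 0 | S b' => -2 * INR (m - 2 * b') * alpha k m b' end.
Proof.
  destruct (classic ((2 * b <= S m)%nat /\ (S m - b < k)%nat)) as [[H1 H2]|Hc].
  - rewrite (alpha_t k (S m) b H1 H2).
    rewrite (A_rule k (S m - b) b) by lia.
    f_equal.
    + destruct (Nat.ltb_spec b (S m - b)) as [H3|H3].
      * rewrite (ltb_t (m - b + 1) k), (leb_t b m) by lia. cbn [andb].
        rewrite (alpha_t k m b) by lia.
        replace (S m - b - 1)%nat with (m - b)%nat by lia.
        replace (k - (m - b))%nat with (k + b - m)%nat by lia. reflexivity.
      * destruct ((m - b + 1 <? k) && (b <=? m))%bool; [|reflexivity].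
        rewrite alpha_zero by lia. ring.
    + destruct b as [|b']; [reflexivity|].
      rewrite (alpha_t k m b') by lia.
      replace (S m - S b')%nat with (m - b')%nat by lia.
      replace (m - b' - b')%nat with (m - 2 * b')%nat by lia. reflexivity.
  - rewrite (alpha_zero k (S m) b Hc).
    assert (P1 : (if ((m - b + 1 <? k) && (b <=? m))%bool then 4 * INR (k + b - m) * alpha k m b else 0) = 0).
    { destruct (Nat.ltb_spec (m - b + 1) k); destruct (Nat.leb_spec b m); cbn [andb]; try reflexivity.
      rewrite alpha_zero by lia. ring. }
    assert (P2 : match b with O => 0 | S b' => -2 * INR (m - 2 * b') * alpha k m b' end = 0).
    { destruct b as [|b']; [reflexivity|].
      destruct (Nat.eq_dec (2 * b') m) as [Heq|Hne].
      - replace (m - 2 * b')%nat with O by lia. simpl INR. ring.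
      - rewrite alpha_zero by lia. ring. }
    rewrite P1, P2. ring.
Qed.

Lemma comb_term k m b (X Y : nat -> nat -> R) : (1 <= k)%nat -> (forall j, Y O j = X O j) ->
  alpha k m b * (4 * INR (k + b - m) * X (pred (k + b - m)%nat) (S (m - 2 * b)%nat))
  + beta k m b * Y (S (m - k - b)%nat) (k - b)%nat
  = (if ((m - b + 1 <? k) && (b <=? m))%bool then 4 * INR (k + b - m) * alpha k m b else 0)
     * X (k + b - S m)%nat (S m - 2 * b)%nat
  + beta k (S m) b * Y (S m - k - b)%nat (k - b)%nat.
Proof.
  intros Hk HY.
  destruct (classic ((2 * b <= m)%nat /\ (m - b < k)%nat)) as [[H1 H2]|Hc].
  - destruct (Nat.eq_dec (m - b + 1) k) as [E|E].
    + rewrite (ltb_f (m - b + 1) k) by lia. cbn [andb].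
      unfold beta. rewrite (leb_f (k + b) m) by lia.
      rewrite (leb_t (k + b) (S m)) by lia. rewrite (ltb_t b k) by lia. cbn [andb].
      replace (k + b - 1)%nat with m by lia.
      replace (S m - k - b)%nat with O by lia. rewrite HY.
      replace (k + b - m)%nat with 1%nat by lia. simpl pred.
      replace (S (m - 2 * b)%nat) with (k - b)%nat by lia. simpl INR. ring.
    + rewrite (ltb_t (m - b + 1) k) by lia. rewrite (leb_t b m) by lia. cbn [andb].
      unfold beta. rewrite (leb_f (k + b) m) by lia.
      rewrite (leb_f (k + b) (S m)) by lia. cbn [andb].
      replace (k + b - S m)%nat with (pred (k + b - m)%nat) by lia.
      replace (S m - 2 * b)%nat with (S (m - 2 * b)%nat) by lia. ring.
  - rewrite (alpha_zero k m b Hc).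
    replace ((if ((m - b + 1 <? k) && (b <=? m))%bool then 4 * INR (k + b - m) * 0 else 0)) with 0
      by (destruct ((m - b + 1 <? k) && (b <=? m))%bool; ring).
    unfold beta.
    destruct (Nat.le_gt_cases (k + b) m) as [H|H].
    + rewrite (leb_t (k + b) m) by lia. rewrite (leb_t (k + b) (S m)) by lia.
      replace (S m - k - b)%nat with (S (m - k - b)%nat) by lia. ring.
    + rewrite (leb_f (k + b) m) by lia. cbn [andb].
      destruct (Nat.eq_dec (k + b) (S m)) as [E|E].
      * rewrite (leb_t (k + b) (S m)) by lia. replace (k + b - 1)%nat with m by lia.
        rewrite (alpha_zero k m b Hc). destruct (b <? k)%nat; simpl; ring.
      * rewrite (leb_f (k + b) (S m)) by lia. cbn [andb]. ring.
Qed.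

Lemma comb k m (X Y : nat -> nat -> R) : (1 <= k)%nat -> (m < 2 * k)%nat ->
  (forall j, Y O j = X O j) ->
  rs (fun b => alpha k m b * (4 * INR (k + b - m) * X (pred (k + b - m)%nat) (S (m - 2 * b)%nat)
        - 2 * INR (m - 2 * b) * X (k + b - m)%nat (pred (m - 2 * b)%nat))) (2 * k)
  + rs (fun b => beta k m b * Y (S (m - k - b)%nat) (k - b)%nat) (2 * k)
  = rs (fun b => alpha k (S m) b * X (k + b - S m)%nat (S m - 2 * b)%nat) (2 * k)
  + rs (fun b => beta k (S m) b * Y (S m - k - b)%nat (k - b)%nat) (2 * k).
Proof.
  intros Hk Hm HY.
  set (LA := fun b => alpha k m b * (4 * INR (k + b - m) * X (pred (k + b - m)%nat) (S (m - 2 * b)%nat))).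
  set (LB := fun b => alpha k m b * (- 2 * INR (m - 2 * b) * X (k + b - m)%nat (pred (m - 2 * b)%nat))).
  set (RA := fun b => (if ((m - b + 1 <? k) && (b <=? m))%bool then 4 * INR (k + b - m) * alpha k m b else 0)
     * X (k + b - S m)%nat (S m - 2 * b)%nat).
  set (RB := fun b => (match b with O => 0 | S b' => -2 * INR (m - 2 * b') * alpha k m b' end)
     * X (k + b - S m)%nat (S m - 2 * b)%nat).
  rewrite (rs_ext _ (fun b => LA b + LB b)) by (intros; unfold LA, LB; ring).
  rewrite (rs_ext (fun b => alpha k (S m) b * _) (fun b => RA b + RB b))
    by (intros; unfold RA, RB; rewrite alpha_rec; ring).
  rewrite !rs_plus.
  assert (HB : rs LB (2 * k) = rs RB (2 * k)).
  { replace (2 * k)%nat with (S (2 * k - 1)) by lia.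
    rewrite (rs_shift RB). replace (RB O) with 0 by (unfold RB; cbv iota; ring). rewrite Rplus_0_l.
    rewrite (rs_trunc LB (2 * k - 1)) by (try lia; intros b Hb1 Hb2; unfold LB;
      rewrite alpha_zero by lia; ring).
    apply rs_ext. intros b Hb. unfold LB, RB.
    replace (k + S b - S m)%nat with (k + b - m)%nat by lia.
    replace (S m - 2 * S b)%nat with (pred (m - 2 * b)%nat) by lia. ring. }
  rewrite HB.
  assert (HA : rs LA (2 * k) + rs (fun b => beta k m b * Y (S (m - k - b)%nat) (k - b)%nat) (2 * k)
             = rs RA (2 * k) + rs (fun b => beta k (S m) b * Y (S m - k - b)%nat (k - b)%nat) (2 * k)).
  { rewrite <- !rs_plus. apply rs_ext. intros b _. unfold LA, RA. apply comb_term; auto. }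
  lra.
Qed.

Lemma ex_derive_rs (F : nat -> R -> R) N s : (forall b, (b <= N)%nat -> ex_derive (F b) s) ->
  ex_derive (fun x => rs (fun b => F b x) N) s.
Proof.
  induction N as [|N IH]; intros H.
  - apply H. lia.
  - change (ex_derive (fun x => rs (fun b => F b x) N + F (S N) x) s).
    apply (ex_derive_plus (fun x => rs (fun b => F b x) N) (F (S N))).
    + apply IH. intros; apply H; lia.
    + apply H; lia.
Qed.

Lemma Derive_rs (F : nat -> R -> R) N s : (forall b, (b <= N)%nat -> ex_derive (F b) s) ->
  Derive (fun x => rs (fun b => F b x) N) s = rs (fun b => Derive (F b) s) N.
Proof.
  induction N as [|N IH]; intros H.
  - reflexivity.
  - change (Derive (fun x => rs (fun b => F b x) N + F (S N) x) s =
            rs (fun b => Derive (F b) s) N + Derive (F (S N)) s).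
    rewrite Derive_plus.
    + rewrite IH; [reflexivity|]. intros; apply H; lia.
    + apply ex_derive_rs. intros; apply H; lia.
    + apply H; lia.
Qed.

Definition E (g : R -> R) (k m : nat) (s : R) : R :=
  rs (fun b => alpha k m b * GR g (k + b - m) (m - 2 * b) s) (2 * k)
  + rs (fun b => beta k m b * DpR (m - k - b) (GR g 0 (k - b)) s) (2 * k).

Lemma alpha_w k m b s j : alpha k m b * (w (k + b - m) j s (1 - s) * 0) = 0.
Proof. ring. Qed.

Lemma alpha_bd k m b j s (c : R) : alpha k m b * (w (k + b - m) j s (1 - s) * c) = 0.
Proof.
  destruct (classic ((2 * b <= m)%nat /\ (m - b < k)%nat)) as [[H1 H2]|Hc].
  - rewrite w_bd. rewrite pow_i by lia. generalize (2 ^ j) ((1 - s) ^ S j). intros. ring.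
  - rewrite alpha_zero by exact Hc. ring.
Qed.

Lemma Derive_E g (Hg : forall x, 0 < x -> forall n, ex_derive_n g n x) k m s :
  (1 <= k)%nat -> (m < 2 * k)%nat -> 0 < s < 1 ->
  Derive (E g k m) s = s * E g k (S m) s.
Proof.
  intros Hk Hm Hs. unfold E.
  assert (D1 : forall b, ex_derive (fun x => alpha k m b * GR g (k + b - m) (m - 2 * b) x) s).
  { intros b. apply ex_derive_scal. eexists. apply (GR_derive g Hg). exact Hs. }
  assert (D2 : forall b, ex_derive (fun x => beta k m b * DpR (m - k - b) (GR g 0 (k - b)) x) s).
  { intros b. apply ex_derive_scal. apply (GR_smooth g Hg (m - k - b)); auto. }
  rewrite Derive_plus.
  2: { apply (ex_derive_rs (fun b x => alpha k m b * GR g (k + b - m) (m - 2 * b) x)). auto. }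
  2: { apply (ex_derive_rs (fun b x => beta k m b * DpR (m - k - b) (GR g 0 (k - b)) x)). auto. }
  rewrite (Derive_rs (fun b x => alpha k m b * GR g (k + b - m) (m - 2 * b) x)) by auto.
  rewrite (Derive_rs (fun b x => beta k m b * DpR (m - k - b) (GR g 0 (k - b)) x)) by auto.
  rewrite (rs_ext (fun b => Derive (fun x => alpha k m b * GR g (k + b - m) (m - 2 * b) x) s) (fun b => s * (alpha k m b * (4 * INR (k + b - m) * GR g (pred (k + b - m)) (S (m - 2 * b)) s
        - 2 * INR (m - 2 * b) * GR g (k + b - m)%nat (pred (m - 2 * b)) s)))).
  2: { intros b _. rewrite Derive_scal.
       rewrite (is_derive_unique _ _ _ (GR_derive g Hg _ _ s Hs)).
       pose proof (alpha_bd k m b (m - 2 * b) s (g (1 - s))). lra. }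
  rewrite (rs_ext (fun b => Derive (fun x => beta k m b * DpR (m - k - b) (GR g 0 (k - b)) x) s) (fun b => s * (beta k m b * DpR (S (m - k - b)) (GR g 0 (k - b)) s))).
  2: { intros b _. rewrite Derive_scal.
       change (DpR (S (m - k - b)) (GR g 0 (k - b)) s) with
         (Derive (DpR (m - k - b) (GR g 0 (k - b))) s / s).
       field. lra. }
  rewrite !rs_scal, <- Rmult_plus_distr_l. f_equal.
  apply (comb k m (fun i j => GR g i j s) (fun r j => DpR r (GR g 0 j) s)); auto.
Qed.

Lemma inv g (Hg : forall x, 0 < x -> forall n, ex_derive_n g n x) k : (1 <= k)%nat ->
  forall m, (m <= 2 * k)%nat -> forall s, 0 < s < 1 -> DpR m (GR g k 0) s = E g k m s.
Proof.
  intros Hk. induction m as [|m IH]; intros Hm s Hs.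
  - change (DpR 0 (GR g k 0) s) with (GR g k 0 s). unfold E.
    rewrite (rs_zero (fun b => beta k 0 b * _)).
    2: { intros b _. unfold beta. rewrite (leb_f (k + b) 0) by lia. cbn [andb]. ring. }
    rewrite (rs_trunc _ 0 (2 * k)) by (try lia; intros b Hb _; rewrite alpha_zero by lia; ring).
    simpl rs. rewrite alpha_t by lia.
    unfold A, ff, Bf. replace (k + 0 - 0)%nat with k by lia. simpl.
    rewrite Nat.sub_0_r. field. apply fact_nz.
  - change (DpR (S m) (GR g k 0) s) with (Derive (DpR m (GR g k 0)) s / s).
    rewrite (Derive_ext_loc _ (E g k m)).
    + rewrite (Derive_E g Hg) by (auto; lia). field. lra.
    + apply (filter_imp (fun y => 0 < y < 1)); [|apply loc01; exact Hs].
      intros y Hy. apply IH; auto. lia.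
Qed.

Theorem mainR g (Hg : forall x, 0 < x -> forall n, ex_derive_n g n x) k t :
  (1 <= k)%nat -> 0 < t < 1 ->
  DpR (2 * k) (GR g k 0) t =
  (INR (fact k) * 4 ^ k) *
  rs (fun b => ((-1) ^ b * INR (fact (k - 1 + b)) / (INR (fact (k - 1 - b)) * INR (fact b)))
               * DpR (k - b) (GR g 0 (k - b)) t) (k - 1).
Proof.
  intros Hk Ht. rewrite (inv g Hg k Hk (2 * k) (le_n _) t Ht). unfold E.
  rewrite (rs_zero (fun b => alpha k (2 * k) b * _)).
  2: { intros b _. rewrite alpha_zero by lia. ring. }
  rewrite Rplus_0_l.
  rewrite (rs_trunc _ (k - 1) (2 * k)).
  2: lia.
  2: { intros b Hb _. unfold beta. rewrite (ltb_f b k) by lia. rewrite andb_false_r. ring. }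
  rewrite <- rs_scal. apply rs_ext. intros b Hb.
  unfold beta. rewrite (leb_t (k + b) (2 * k)) by lia. rewrite (ltb_t b k) by lia. cbn [andb].
  rewrite alpha_t by lia.
  replace (k + b - 1 - b)%nat with (k - 1)%nat by lia.
  replace (2 * k - k - b)%nat with (k - b)%nat by lia.
  unfold A, ff, Bf. replace (k - (k - 1))%nat with 1%nat by lia.
  destruct k as [|k']; [lia|].
  replace (S k' - 1)%nat with k' by lia. cbn [pow].
  generalize (4 ^ k') ((-1) ^ b) (DpR (S k' - b) (GR g 0 (S k' - b)) t). intros P Sg Y.
  simpl (fact 1). simpl (INR 1).
  field. split; apply fact_nz.
Qed.

Lemma injC (z1 z2 : C) : Re z1 = Re z2 -> Im z1 = Im z2 -> z1 = z2.
Proof. destruct z1, z2. unfold Re, Im. simpl. intros -> ->. reflexivity. Qed.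

Lemma Re_Dpow n phi t : Re (Dpow n phi t) = DpR n (fun s => Re (phi s)) t.
Proof.
  revert t. induction n as [|n IH]; intros t; [reflexivity|].
  change (Derive (fun s => Re (Dpow n phi s)) t / t = Derive (DpR n (fun s => Re (phi s))) t / t).
  f_equal. apply Derive_ext. exact IH.
Qed.

Lemma Im_Dpow n phi t : Im (Dpow n phi t) = DpR n (fun s => Im (phi s)) t.
Proof.
  revert t. induction n as [|n IH]; intros t; [reflexivity|].
  change (Derive (fun s => Im (Dpow n phi s)) t / t = Derive (DpR n (fun s => Im (phi s))) t / t).
  f_equal. apply Derive_ext. exact IH.
Qed.

Lemma Re_scal (r : R) (z : C) : Re (@scal R_Ring (prod_ModuleSpace R_Ring R_ModuleSpace R_ModuleSpace) r z) = r * Re z.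
Proof. destruct z. reflexivity. Qed.
Lemma Im_scal (r : R) (z : C) : Im (@scal R_Ring (prod_ModuleSpace R_Ring R_ModuleSpace R_ModuleSpace) r z) = r * Im z.
Proof. destruct z. reflexivity. Qed.

Lemma Re_sum (F : nat -> C) n : Re (@sum_n (prod_ModuleSpace R_Ring R_ModuleSpace R_ModuleSpace) F n) = rs (fun b => Re (F b)) n.
Proof.
  induction n as [|n IH].
  - rewrite sum_O. reflexivity.
  - rewrite sum_Sn. simpl rs. rewrite <- IH. reflexivity.
Qed.
Lemma Im_sum (F : nat -> C) n : Im (@sum_n (prod_ModuleSpace R_Ring R_ModuleSpace R_ModuleSpace) F n) = rs (fun b => Im (F b)) n.
Proof.
  induction n as [|n IH].
  - rewrite sum_O. reflexivity.
  - rewrite sum_Sn. simpl rs. rewrite <- IH. reflexivity.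
Qed.

Lemma G_split (f : R -> C)
  (Hr : forall x, 0 < x -> forall n, ex_derive_n (fun s => Re (f s)) n x)
  (Hi : forall x, 0 < x -> forall n, ex_derive_n (fun s => Im (f s)) n x) i j s :
  0 < s < 1 ->
  G f i j s = (GR (fun s => Re (f s)) i j s, GR (fun s => Im (f s)) i j s).
Proof.
  intros Hs. unfold G.
  apply (is_RInt_unique (V:=C_R_CompleteNormedModule)).
  apply (is_RInt_fct_extend_pair (U:=R_NormedModule) (V:=R_NormedModule)).
  - eapply is_RInt_ext; [|unfold GR; apply (RInt_correct (V:=R_CompleteNormedModule)); apply (ex_RInt_wg _ Hr i j s); lra].
    intros u _. unfold w, Re. destruct (f u) as [a b]. simpl. ring.
  - eapply is_RInt_ext; [|unfold GR; apply (RInt_correct (V:=R_CompleteNormedModule)); apply (ex_RInt_wg _ Hi i j s); lra].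
    intros u _. unfold w, Im. destruct (f u) as [a b]. simpl. ring.
Qed.

Theorem theorem3p7 (f : R -> C) (rho : R) (k : nat) (t : R) :
  (forall x : R, 0 < x -> smooth_at f x) ->
  rho < 1 ->
  (forall u : R, rho < u -> f u = 0%C) ->
  (1 <= k)%nat ->
  0 < t < 1 ->
  Dpow (2 * k) (h f k) t = Dpow (2 * k) (G f k 0) t /\
  Dpow (2 * k) (G f k 0) t =
    scal (INR (fact k) * 4 ^ k)
      (sum_n (fun j : nat =>
         scal ((-1) ^ j * INR (fact (k - 1 + j))
                 / (INR (fact (k - 1 - j)) * INR (fact j)))
              (Dpow (k - j) (G f 0 (k - j)) t))
         (k - 1)).
Proof.
  intros Hsm _ _ Hk Ht.
  split; [reflexivity|].
  assert (Hr : forall x, 0 < x -> forall n, ex_derive_n (fun s => Re (f s)) n x)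
    by (intros x Hx n; exact (proj1 (Hsm x Hx n))).
  assert (Hi : forall x, 0 < x -> forall n, ex_derive_n (fun s => Im (f s)) n x)
    by (intros x Hx n; exact (proj2 (Hsm x Hx n))).
  assert (ER : forall n i j, DpR n (fun s => Re (G f i j s)) t = DpR n (GR (fun s => Re (f s)) i j) t).
  { intros n i j. apply DpR_ext; [|exact Ht].
    intros s Hs. rewrite (G_split f Hr Hi i j s Hs). reflexivity. }
  assert (EI : forall n i j, DpR n (fun s => Im (G f i j s)) t = DpR n (GR (fun s => Im (f s)) i j) t).
  { intros n i j. apply DpR_ext; [|exact Ht].
    intros s Hs. rewrite (G_split f Hr Hi i j s Hs). reflexivity. }
  apply injC.
  - rewrite Re_Dpow, Re_scal. rewrite Re_sum, ER.
    rewrite (mainR _ Hr k t Hk Ht). f_equal. apply rs_ext. intros b _.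
    rewrite Re_scal, Re_Dpow, ER. reflexivity.
  - rewrite Im_Dpow, Im_scal, Im_sum, EI.
    rewrite (mainR _ Hi k t Hk Ht). f_equal. apply rs_ext. intros b _.
    rewrite Im_scal, Im_Dpow, EI. reflexivity.
Qed.
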